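(* Let $X$ be a distance-regular graph of diameter $d\geq 3$ on $n$ vertices with degree $k$, and suppose $k>\gamma n>2$ for some $\gamma>0$. If $X$ is not bipartite, then $\mathrm{motion}(X)\geq \frac{\gamma}{3}n$.
   Context: A connected graph $X$ of diameter $d$ is distance-regular if there are integers $a_i,b_i,c_i$ ($0\le i\le d$) such that for all vertices $v,w$ with $\mathrm{dist}(v,w)=i$, $w$ has exactly $c_i$ neighbours at distance $i-1$, $a_i$ at distance $i$, $b_i$ at distance $i+1$ from $v$; $X$ is $k$-regular with $k=b_0$. The motion $\mathrm{motion}(X)$ is the minimum, over non-identity automorphisms of $X$, of the number of vertices not fixed by the automorphism. *)

(* Defs.v *)
From HB Require Import structures.
From mathcomp Require Import all_boot all_order all_algebra all_fingroup.
Set Implicit Arguments. Unset Strict Implicit. Unset Printing Implicit Defensive.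

Section Graphs.
Variable T : finType.
Variable e : rel T.

Definition simple_graph : Prop := symmetric e /\ irreflexive e.

Definition connected_graph : Prop := forall x y : T, connect e x y.

Fixpoint ball (n : nat) (x : T) : {set T} :=
  match n with
  | 0 => [set x]
  | n'.+1 => ball n' x :|: [set y | [exists z in ball n' x, e z y]]
  end.

(* graph distance: least i with y in ball i x (= #|T| if unreachable) *)
Definition dist (x y : T) : nat :=
  find (fun i => y \in ball i x) (iota 0 #|T|).

Definition diameter_eq (d : nat) : Prop :=
  (exists x y, dist x y = d) /\ (forall x y, dist x y <= d).

Definition regular (k : nat) : Prop := forall v : T, #|[set u | e v u]| = k.

Definition distance_regular (d : nat) : Prop :=
  connected_graph /\ diameter_eq d /\
  exists a b c : nat -> nat,
    forall i, i <= d -> forall v w, dist v w = i ->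
      [/\ #|[set u | e w u & (dist v u).+1 == i]| = c i,
          #|[set u | e w u & dist v u == i]| = a i &
          #|[set u | e w u & dist v u == i.+1]| = b i].

Definition bipartite : Prop :=
  exists f : T -> bool, forall x y, e x y -> f x != f y.

Definition is_automorphism (s : {perm T}) : Prop :=
  forall x y, e (s x) (s y) = e x y.

Definition nfixed_moved (s : {perm T}) : nat := #|[set x | s x != x]|.

End Graphs.

(* Main.v *)
Require Import Defs.
From HB Require Import structures.
From mathcomp Require Import all_boot all_order all_algebra all_fingroup.
From mathcomp Require Import zify.
Set Implicit Arguments. Unset Strict Implicit. Unset Printing Implicit Defensive.
Lemma ar_A1 k U3 I1 U2 cv I2 U1 cx I3 A lam mu : k <= U3 -> U3 + I1 = U2 + cv ->
  U2 + I2 = U1 + cx -> U1 + I3 = A + 1 -> cx = lam -> cv = lam ->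
  2*k < 3*mu -> lam+mu+1 <= k -> 0 < A.
Proof. lia. Qed.
Lemma ar_A2 mu k I lam : mu+mu <= k + I -> I <= lam -> 2*k < 3*mu -> lam+mu+1<=k -> False.
Proof. lia. Qed.
Lemma ar_A3 mu k X : mu+mu <= k + X -> 2*k < 3*mu -> 0 < X.
Proof. lia. Qed.
Lemma ar_A4 n j : n <= 1 + j -> j.+2 <= 1 + n -> n = j.+1.
Proof. lia. Qed.
Lemma ar_B1 U U1 c2 a1 k : U + 0 = U1 + c2 -> U1 + 0 = 1 + a1 -> U <= k -> a1 + c2 + 1 <= k.
Proof. lia. Qed.
Lemma ar_B2 n m : n <= 1 -> m = 3 -> m <= n.+1 -> False.
Proof. lia. Qed.
Lemma ar1 lam mu k I D J M : lam + lam <= k + I -> I <= mu -> D <= lam -> D = k - J ->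
  J <= M -> lam + mu + 1 <= k -> 3 * M < k -> False.
Proof. lia. Qed.
Lemma ar_B3 D C k J M : D <= C -> D = k - J -> J <= M -> 3 * M < k -> 0 < C.
Proof. lia. Qed.
Lemma ar_B4 D C k J M : D <= C -> D = k - J -> J <= M -> 3 * M < k -> 2 * k < 3 * C.
Proof. lia. Qed.
Lemma ar_B5 du dv : dv <= du.+1 -> du <= dv.+1 -> du <> dv -> du = dv.+1 \/ dv = du.+1.
Proof. lia. Qed.

Lemma ballS (T : finType) (e : rel T) n x y :
  (y \in ball e n.+1 x) = (y \in ball e n x) || [exists z in ball e n x, e z y].
Proof. by rewrite /= !inE. Qed.

Lemma ball0 (T : finType) (e : rel T) x y : (y \in ball e 0 x) = (y == x).
Proof. by rewrite /= inE. Qed.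

Lemma ball_step (T : finType) (e : rel T) n x y z :
  y \in ball e n x -> e y z -> z \in ball e n.+1 x.
Proof. by move=> Hy Hyz; rewrite ballS; apply/orP; right; apply/existsP; exists y; rewrite Hy. Qed.

Lemma ball_mono (T : finType) (e : rel T) n x y :
  y \in ball e n x -> y \in ball e n.+1 x.
Proof. by move=> H; rewrite ballS H. Qed.

Lemma ball_le (T : finType) (e : rel T) m n x y :
  m <= n -> y \in ball e m x -> y \in ball e n x.
Proof.
move=> /subnK <-; elim: (n - m) => [|j IH] H //.
by rewrite addSn; apply: ball_mono; apply: IH.
Qed.

Lemma ball_Sinv (T : finType) (e : rel T) n x z :
  z \in ball e n.+1 x -> z \in ball e n x \/ exists2 y, y \in ball e n x & e y z.
Proof.
rewrite ballS => /orP [H|/existsP [y /andP [H1 H2]]]; first by left.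
by right; exists y.
Qed.

Lemma ball_prepend (T : finType) (e : rel T) n x y w :
  e x y -> w \in ball e n y -> w \in ball e n.+1 x.
Proof.
move=> Hxy; elim: n w => [|n IH] w.
  by rewrite ball0 => /eqP ->; apply: (ball_step (y:=x)) => //; rewrite ball0.
move=> /ball_Sinv [H|[w' H1 H2]]; first by apply: ball_mono; apply: IH.
by apply: (ball_step (y:=w')) => //; apply: IH.
Qed.

Lemma ball_sym (T : finType) (e : rel T) n x y :
  symmetric e -> y \in ball e n x -> x \in ball e n y.
Proof.
move=> se; elim: n y => [|n IH] y.
  by rewrite !ball0 eq_sym.
move=> /ball_Sinv [H|[w H1 H2]]; first by apply: ball_mono; apply: IH.
by apply: (ball_prepend (y:=w)); [rewrite se | apply: IH].
Qed.

Lemma ball_trans (T : finType) (e : rel T) m n x y z :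
  y \in ball e m x -> z \in ball e n y -> z \in ball e (m + n) x.
Proof.
move=> Hy; elim: n z => [|n IH] z.
  by rewrite ball0 addn0 => /eqP ->.
move=> /ball_Sinv [H|[w H1 H2]]; rewrite addnS.
  by apply: ball_mono; apply: IH.
by apply: (ball_step (y:=w)) => //; apply: IH.
Qed.

Lemma ball_path (T : finType) (e : rel T) x p :
  path e x p -> last x p \in ball e (size p) x.
Proof.
elim: p x => [|a p IH] x /=; first by rewrite ball0.
by move=> /andP [H1 H2]; apply: (ball_prepend (y:=a)) => //; apply: IH.
Qed.

Lemma reach (T : finType) (e : rel T) x y :
  connected_graph e -> exists2 i, i < #|T| & y \in ball e i x.
Proof.
move=> /(_ x y) /connectP [p Hp ->].
case: (shortenP Hp) => p' Hp' Hu _.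
exists (size p'); last exact: ball_path.
have := max_card (mem (x :: p')).
by rewrite (card_uniqP Hu).
Qed.

Lemma dist_ball (T : finType) (e : rel T) x y :
  connected_graph e -> y \in ball e (dist e x y) x.
Proof.
move=> /(reach x y) [i Hi Hb].
have Hh : has (fun i => y \in ball e i x) (iota 0 #|T|).
  by apply/hasP; exists i => //; rewrite mem_iota.
have := nth_find 0 Hh.
have Hf : find (fun i => y \in ball e i x) (iota 0 #|T|) < #|T|.
  by move: Hh; rewrite has_find size_iota.
by rewrite nth_iota.
Qed.

Lemma dist_min (T : finType) (e : rel T) n x y :
  y \in ball e n x -> dist e x y <= n.
Proof.
move=> H; rewrite leqNgt; apply/negP => Hlt.
have Hs : dist e x y <= #|T|.
  by rewrite /dist -{2}(size_iota 0 #|T|) find_size.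
have := before_find 0 Hlt.
rewrite nth_iota ?add0n ?H //.
by apply: (leq_trans Hlt).
Qed.

Lemma distP (T : finType) (e : rel T) n x y :
  connected_graph e -> (dist e x y <= n) = (y \in ball e n x).
Proof.
move=> c; apply/idP/idP; last exact: dist_min.
by move=> H; apply: ball_le H (dist_ball x y c).
Qed.

Lemma dist_sym (T : finType) (e : rel T) x y :
  connected_graph e -> symmetric e -> dist e x y = dist e y x.
Proof.
move=> c s; apply/eqP; rewrite eqn_leq !(distP _ _ _ c).
by apply/andP; split; apply: ball_sym => //; rewrite -distP.
Qed.

Lemma dist_tri (T : finType) (e : rel T) x y z :
  connected_graph e -> dist e x z <= dist e x y + dist e y z.
Proof.
move=> c; rewrite (distP _ _ _ c).
by apply: ball_trans; apply: dist_ball.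
Qed.

Lemma dist0 (T : finType) (e : rel T) x y :
  connected_graph e -> (dist e x y == 0) = (x == y).
Proof.
move=> c; rewrite -leqn0 (distP _ _ _ c) ball0 eq_sym //.
Qed.

Lemma dist_le1 (T : finType) (e : rel T) x y :
  connected_graph e -> (dist e x y <= 1) = (x == y) || e x y.
Proof.
move=> c; rewrite (distP _ _ _ c) ballS ball0 eq_sym; congr (_ || _).
apply/existsP/idP => [[z /andP [H1 H2]]|H]; last by exists x; rewrite ball0 eqxx.
by move: H1; rewrite ball0 => /eqP <-.
Qed.

Lemma dist_adj (T : finType) (e : rel T) x y z :
  connected_graph e -> e y z -> dist e x z <= (dist e x y).+1.
Proof.
move=> c H; apply: leq_trans (dist_tri x y z c) _.
by rewrite -addn1 leq_add2l (dist_le1 _ _ c) H orbT.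
Qed.

Lemma dist_geo (T : finType) (e : rel T) j i x u :
  connected_graph e -> dist e x u = i + j ->
  exists p, dist e x p = i /\ dist e p u = j.
Proof.
move=> c; elim: j u => [|j IH] u.
  by rewrite addn0 => H; exists u; split => //; apply/eqP; rewrite dist0.
move=> Hd.
have := dist_ball x u c; rewrite Hd addnS => /ball_Sinv [H|[y Hy Hyu]].
  by have := dist_min H; rewrite Hd addnS ltnn.
have Hdy : dist e x y = i + j.
  apply/eqP; rewrite eqn_leq dist_min //=.
  by have := dist_adj x c Hyu; rewrite Hd addnS ltnS.
have [p [H1 H2]] := IH y Hdy.
exists p; split => //; apply/eqP; rewrite eqn_leq.
have := dist_tri x p u c; rewrite Hd H1 leq_add2l => ->.
by have := dist_adj p c Hyu; rewrite H2 => ->.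
Qed.

Definition C (T : finType) (e : rel T) a b := [set w | e a w & e b w].

Lemma inter_bound (T : finType) (S A B : {set T}) :
  A \subset S -> B \subset S -> #|A| + #|B| <= #|S| + #|A :&: B|.
Proof.
move=> HA HB; rewrite -cardsUI leq_add2r; apply: subset_leq_card.
by rewrite subUset HA HB.
Qed.

Lemma dist1E (T : finType) (e : rel T) x y :
  simple_graph e -> connected_graph e -> (dist e x y == 1) = e x y.
Proof.
move=> [s i] c; apply/idP/idP => [/eqP H|H].
  have := dist_le1 x y c; rewrite H leqnn /= => /esym /orP [/eqP Hxy|//].
  by move: (dist0 x y c); rewrite H Hxy eqxx.
rewrite eqn_leq dist_le1 // H orbT /= lt0n dist0 //.
by apply/eqP => Hxy; move: H; rewrite Hxy i.
Qed.

Lemma dist2 (T : finType) (e : rel T) x p y : simple_graph e -> connected_graph e ->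
  x != y -> ~~ e x y -> e x p -> e p y -> dist e x y = 2.
Proof.
move=> sg c Hne Hn H1 H2; apply/eqP; rewrite eqn_leq.
have -> : dist e x y <= 2.
  apply: leq_trans (dist_tri x p y c) _.
  rewrite -(dist1E _ _ sg c) in H1; rewrite -(dist1E _ _ sg c) in H2.
  by rewrite (eqP H1) (eqP H2).
by rewrite /= ltnNge dist_le1 // negb_or Hne Hn.
Qed.

Lemma lemA (T : finType) (e : rel T) mu lam k :
  simple_graph e -> connected_graph e -> regular e k ->
  (forall a b, dist e a b = 2 -> #|C e a b| = mu) ->
  (forall a b, e a b -> #|C e a b| = lam) ->
  2 * k < 3 * mu -> lam + mu + 1 <= k ->
  forall i x u v, dist e x u = i -> dist e x v = i -> e u v = false.
Proof.
move=> sg c reg Hmu Hlam Hk1 Hk2.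
have [sym irr] := sg.
elim/ltn_ind => i IH x u v Hu Hv.
apply/negP => Huv.
case: i IH Hu Hv => [|[|j]] IH Hu Hv.
- move/eqP: Hu; rewrite dist0 // => /eqP Hxu.
  move/eqP: Hv; rewrite dist0 // => /eqP Hxv.
  by move: Huv; rewrite -Hxu -Hxv irr.
- have Hxu : e x u by rewrite -(dist1E _ _ sg c) Hu.
  have Hxv : e x v by rewrite -(dist1E _ _ sg c) Hv.
  pose A := [set y | e u y & (y != x) && ~~ e x y && ~~ e v y].
  have HN : [set y | e u y] \subset ((A :|: [set x]) :|: C e x u) :|: C e v u.
    apply/subsetP => y; rewrite !inE => Hy; rewrite Hy /=.
    by case: (y == x); case: (e x y); case: (e v y).
  have Hle := subset_leq_card HN.
  rewrite (reg u) in Hle.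
  have h1 := cardsUI (A :|: [set x] :|: C e x u) (C e v u).
  have h2 := cardsUI (A :|: [set x]) (C e x u).
  have h3 := cardsUI A [set x].
  rewrite cards1 in h3.
  have hxu := Hlam x u Hxu.
  have hvu := Hlam v u (etrans (sym v u) Huv).
  have : 0 < #|A| by apply: (ar_A1 Hle h1 h2 h3 hxu hvu Hk1 Hk2).
  case/card_gt0P => y; rewrite inE => /andP [Huy /andP [/andP [Hyx Hxy] Hvy]].
  have Dxy : dist e x y = 2 by apply: (dist2 (p:=u)); rewrite // eq_sym.
  have Dvy : dist e v y = 2.
    apply: (dist2 (p:=u)) => //; last by rewrite sym.
    by apply/eqP => Hvy'; move: Hxy; rewrite -Hvy' Hxv.
  have Hb := inter_bound (S := [set w | e y w]) (A := C e x y) (B := C e v y).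
  have Hs : C e x y :&: C e v y \subset C e x v.
    by apply/subsetP => w; rewrite !inE => /andP [/andP [-> _] /andP [-> _]].
  have Hs' := subset_leq_card Hs.
  rewrite (Hlam x v Hxv) in Hs'.
  rewrite (Hmu _ _ Dxy) (Hmu _ _ Dvy) (reg y) in Hb.
  have H1 : C e x y \subset [set w | e y w].
    by apply/subsetP => w; rewrite !inE => /andP [_ ->].
  have H2 : C e v y \subset [set w | e y w].
    by apply/subsetP => w; rewrite !inE => /andP [_ ->].
  exact: (ar_A2 (Hb H1 H2) Hs' Hk1 Hk2).
- have Hu' : dist e x u = 2 + j by rewrite Hu.
  have Hv' : dist e x v = 2 + j by rewrite Hv.
  have [p [Hp1 Hp2]] := dist_geo c Hu'.
  have [q [Hq1 Hq2]] := dist_geo c Hv'.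
  have H1 : C e x p \subset [set w | e x w].
    by apply/subsetP => w; rewrite !inE => /andP [-> _].
  have H2 : C e x q \subset [set w | e x w].
    by apply/subsetP => w; rewrite !inE => /andP [-> _].
  have Hb := inter_bound H1 H2.
  rewrite (Hmu _ _ Hp1) (Hmu _ _ Hq1) (reg x) in Hb.
  have : 0 < #|C e x p :&: C e x q| by apply: (ar_A3 Hb Hk1).
  case/card_gt0P => w; rewrite !inE => /andP [/andP [Hxw Hpw] /andP [_ Hqw]].
  have Dw : forall z t, e z w -> dist e z t = j -> dist e x t = j.+2 ->
      dist e w t = j.+1.
    move=> z t Hzw Hzt Hxt.
    have Hwz : dist e w z = 1 by apply/eqP; rewrite dist1E // sym.
    have Hxw' : dist e x w = 1 by apply/eqP; rewrite dist1E.
    have := dist_tri w z t c; have := dist_tri x w t c.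
    rewrite Hwz Hzt Hxw' Hxt => h1 h2; exact: ar_A4.
  have := IH j.+1 (ltnSn _) w u v (Dw p u Hpw Hp2 Hu) (Dw q v Hqw Hq2 Hv).
  by rewrite Huv.
Qed.

Lemma main_nat (T : finType) (e : rel T) d k (s : {perm T}) :
  simple_graph e -> distance_regular e d -> 3 <= d -> regular e k ->
  ~ bipartite e -> is_automorphism e s -> s != 1%g ->
  k <= 3 * nfixed_moved s.
Proof.
move=> sg [c [[[x0 [w0 Hd]] Hdle] [a [b [cc Hdr]]]]] Hd3 reg nb aut sne.
have [sym irr] := sg.
have Hmu : forall x y, dist e x y = 2 -> #|C e x y| = cc 2.
  move=> x y Hxy; have [Hc _ _] := Hdr 2 (ltnW Hd3) x y Hxy.
  rewrite -Hc; apply: eq_card => u; rewrite !inE.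
  by rewrite eqSS dist1E // andbC.
have Hlam : forall x y, e x y -> #|C e x y| = a 1.
  move=> x y Hxy; have Hxy' : dist e x y = 1 by apply/eqP; rewrite dist1E.
  have [_ Ha _] := Hdr 1 (leq_trans (isT : 1 <= 3) Hd3) x y Hxy'.
  rewrite -Ha; apply: eq_card => u; rewrite !inE.
  by rewrite dist1E // andbC.
have Hd' : dist e x0 w0 = 3 + (d - 3) by rewrite Hd subnKC.
have [z [Hz _]] := dist_geo c Hd'.
have Hz' : dist e x0 z = 1 + 2 by rewrite Hz.
have [p0 [Hp01 Hp0z]] := dist_geo c Hz'.
have Hx0p0 : e x0 p0 by rewrite -(dist1E _ _ sg c) Hp01.
have F1 : a 1 + cc 2 + 1 <= k.
  have I1 : [set x0] :&: C e x0 p0 = set0.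
    apply/setP => w; rewrite !inE; apply/negP => /andP [/eqP -> /andP [H _]].
    by rewrite irr in H.
  have I2 : ([set x0] :|: C e x0 p0) :&: C e p0 z = set0.
    apply/setP => w; rewrite !inE; apply/negP => /andP [Hw /andP [_ Hzw]].
    have H1 : dist e x0 w <= 1.
      rewrite dist_le1 //; case/orP: Hw => [/eqP ->|/andP [-> _]];
        by rewrite ?eqxx ?orbT.
    have := dist_adj x0 c (etrans (sym w z) Hzw).
    exact: ar_B2 H1 Hz.
  have Hs : ([set x0] :|: C e x0 p0) :|: C e p0 z \subset [set w | e p0 w].
    apply/subsetP => w; rewrite !inE => /orP [/orP [/eqP ->|/andP [_ ->]]|/andP [-> _]] //.
    by rewrite sym.
  have := subset_leq_card Hs.
  have h1 := cardsUI ([set x0] :|: C e x0 p0) (C e p0 z).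
  have h2 := cardsUI [set x0] (C e x0 p0).
  rewrite I2 I1 cards0 cards1 (Hlam _ _ Hx0p0) (Hmu _ _ Hp0z) in h1 h2.
  rewrite (reg p0).
  exact: ar_B1 h1 h2.
have Hp0z' : dist e p0 z = 1 + 1 by rewrite Hp0z.
have [r [Hr1 Hr2]] := dist_geo c Hp0z'.
have Hp0r : e p0 r by rewrite -(dist1E _ _ sg c) Hr1.
have Hrz : e r z by rewrite -(dist1E _ _ sg c) Hr2.
rewrite leqNgt; apply/negP => Hlt.
set M := [set x | s x != x] in Hlt.
have HM : nfixed_moved s = #|M| by [].
rewrite HM in Hlt.
have [x Hx] : exists x, s x != x.
  case: (pickP [pred x | s x != x]) => [x Hx|H]; first by exists x.
  case/negP: sne; apply/eqP/permP => x; rewrite perm1.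
  by have := H x; rewrite /= => /negbFE /eqP.
set y := s x.
have Hfix : [set w | e x w] :\: M \subset C e x y.
  apply/subsetP => w; rewrite !inE => /andP [Hw Hxw]; rewrite Hxw /=.
  move/negbNE/eqP: Hw => Hw.
  by rewrite /y -{1}Hw aut.
have Hc1 := subset_leq_card Hfix.
have Hc2 := cardsD [set w | e x w] M.
have Hc3 : #|[set w | e x w] :&: M| <= #|M| by apply: subset_leq_card; apply: subsetIr.
rewrite (reg x) in Hc2.
have [Hxy|Hxy] := boolP (e x y).
  rewrite (Hlam _ _ Hxy) in Hc1.
  have Hb := inter_bound (S := [set w | e r w]) (A := C e r p0) (B := C e r z).
  have Hs : C e r p0 :&: C e r z \subset C e p0 z.
    by apply/subsetP => w; rewrite !inE => /andP [/andP [_ ->] /andP [_ ->]].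
  have Hs' := subset_leq_card Hs.
  rewrite (Hmu _ _ Hp0z) in Hs'.
  rewrite (Hlam _ _ (etrans (sym r p0) Hp0r)) (Hlam _ _ Hrz) (reg r) in Hb.
  have H1 : C e r p0 \subset [set w | e r w].
    by apply/subsetP => w; rewrite !inE => /andP [-> _].
  have H2 : C e r z \subset [set w | e r w].
    by apply/subsetP => w; rewrite !inE => /andP [-> _].
  exfalso; exact: (ar1 (Hb H1 H2) Hs' Hc1 Hc2 Hc3 F1 Hlt).
have : 0 < #|C e x y| by apply: (ar_B3 Hc1 Hc2 Hc3 Hlt).
case/card_gt0P => p; rewrite inE => /andP [Hxp Hyp].
have Dxy : dist e x y = 2.
  apply: (dist2 (p:=p)) => //; last by rewrite sym.
  by rewrite eq_sym.
rewrite (Hmu _ _ Dxy) in Hc1.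
have HA := lemA sg c reg Hmu Hlam (ar_B4 Hc1 Hc2 Hc3 Hlt) F1.
apply: nb; exists (fun v => odd (dist e x0 v)) => u v Huv.
have h1 := dist_adj x0 c Huv.
have h2 := dist_adj x0 c (etrans (sym v u) Huv).
have [Heq|Hne] := eqVneq (dist e x0 u) (dist e x0 v).
  by have := HA (dist e x0 u) x0 u v erefl (esym Heq); rewrite Huv.
move/eqP: Hne => Hne.
have [->|->] := ar_B5 h1 h2 Hne.
  by rewrite /= ; case: (odd _).
by rewrite /=; case: (odd _).
Qed.

Import Order.TTheory GRing.Theory Num.Theory.
Local Open Scope ring_scope.

Theorem proposition4p6 (R : realFieldType) (T : finType) (e : rel T)
    (d k : nat) (gamma : R) :
  simple_graph e ->
  distance_regular e d ->
  (3 <= d)%N ->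
  regular e k ->
  0 < gamma ->
  gamma * (#|T|)%:R < k%:R ->
  2 < gamma * (#|T|)%:R ->
  ~ bipartite e ->
  forall s : {perm T}, is_automorphism e s -> s != 1%g ->
    gamma / 3%:R * (#|T|)%:R <= (nfixed_moved s)%:R.
Proof.
move=> sg dr Hd reg Hg Hk H2 nb s aut sne.
have Hn := main_nat sg dr Hd reg nb aut sne.
have Hk' : (k%:R : R) <= 3%:R * (nfixed_moved s)%:R by rewrite -natrM ler_nat.
rewrite mulrAC ler_pdivrMr ?ltr0n // mulrC.
rewrite [X in _ <= X]mulrC [X in X <= _]mulrC.
exact: le_trans (ltW Hk) Hk'.
Qed.
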